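(* Let $\alpha\in(0,1)$, $c>0$, $c'>0$, and let $K_\alpha$ be a class of finite simple undirected graphs closed under taking subgraphs such that every $H\in K_\alpha$ with $h$ vertices has a balanced separator of cardinality at most $c\,h^\alpha$. Then there exist constants $C$ and $n_0$ depending only on $\alpha,c,c'$ such that the following holds. Let $G\in K_\alpha$ be connected with $n\ge n_0$ vertices, such that every balanced separator of $G$ has at least $c' n^\alpha$ vertices. Let $\pi_{nd}$ be any nested dissection order of $G$ and $\pi$ any vertex order of $G$. Then each of the following four quantities for $\pi_{nd}$ is at most $C$ times the same quantity for $\pi$: (1) $\max_{v}$ of the number of vertices of $\mathrm{SS}(v)$; (2) $\max_v$ of the number of arcs of $\mathrm{SS}(v)$; (3) the average over all $v\in V$ of the number of vertices of $\mathrm{SS}(v)$; (4) the average over all $v\in V$ of the number of arcs of $\mathrm{SS}(v)$ (search spaces taken in $G_{\pi_{nd}}^\wedge$, respectively $G_\pi^\wedge$).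
   Context: Let $G=(V,E)$ be a finite simple undirected graph with $n=|V|$ vertices. A vertex order is a bijection $\pi:\{1,\dots,n\}\to V$; the rank of $v$ is $\pi^{-1}(v)$. Contracting a vertex $v$ in a graph means deleting $v$ and its incident edges and adding an edge between every pair of former neighbors of $v$ that are not already adjacent. The core graph $G_{\pi,i}$ is obtained from $G$ by contracting $\pi(1),\dots,\pi(i-1)$ in this order. $G_\pi^*$ is the graph on $V$ whose edge set is the union of the edge sets of all $G_{\pi,i}$, $i=1,\dots,n$ (i.e. $G$ together with all edges inserted during the contractions). $G_\pi^\wedge$ is the directed graph obtained from $G_\pi^*$ by orienting every edge from its endpoint of lower rank to its endpoint of higher rank. The search space $\mathrm{SS}(v)$ is the subgraph of $G_\pi^\wedge$ induced by the set of vertices reachable from $v$ in $G_\pi^\wedge$ (including $v$). A balanced separator of a graph with vertex set $V$, $|V|=n$, is a set $S\subseteq V$ such that $V\setminus S$ can be partitioned into sets $A,B$ (possibly empty) with no edge between $A$ and $B$ and $|A|,|B|\le 2n/3$. A nested dissection order of $G$ is defined recursively: if $G$ is empty it is the empty order; otherwise choose a balanced separator $S$ of $G$ of minimum cardinality with corresponding parts $A,B$, give the vertices of $S$ the ranks $n-|S|+1,\dots,n$ in arbitrary order, give the vertices of $A$ the ranks $1,\dots,|A|$ according to a nested dissection order of $G[A]$, and the vertices of $B$ the ranks $|A|+1,\dots,|A|+|B|$ according to a nested dissection order of $G[B]$. *)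

(* Defs.v *)
From Stdlib Require Import Reals.
From mathcomp Require Import all_boot.
Set Implicit Arguments. Unset Strict Implicit. Unset Printing Implicit Defensive.

Definition simple_graph (n : nat) (e : rel 'I_n) : Prop :=
  symmetric e /\ irreflexive e.

Definition connected_graph (n : nat) (e : rel 'I_n) : Prop :=
  forall x y, connect e x y.

(* x^a for x >= 0 real (with 0^a = 0). *)
Definition rpow (x a : R) : R :=
  if Rle_dec x R0 then R0 else Rpower x a.

Definition bal_sep_in (n : nat) (e : rel 'I_n) (U S A B : {set 'I_n}) : Prop :=
  [/\ S \subset U, A :|: B = U :\: S, [disjoint A & B],
      (forall x y, x \in A -> y \in B -> ~~ e x y) &
      (3 * #|A| <= 2 * #|U|) && (3 * #|B| <= 2 * #|U|)].

Definition balanced_sep_in (n : nat) (e : rel 'I_n) (U S : {set 'I_n}) : Prop :=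
  exists A B, bal_sep_in e U S A B.

Definition balanced_sep (n : nat) (e : rel 'I_n) (S : {set 'I_n}) : Prop :=
  balanced_sep_in e setT S.

(* A vertex order is represented as the sequence pi(1), ..., pi(n) of all vertices,
   each exactly once; the rank of v is (index v s).+1. *)
Definition vertex_order (n : nat) (s : seq 'I_n) : Prop :=
  perm_eq s (enum 'I_n).

Inductive nd_order (n : nat) (e : rel 'I_n) : {set 'I_n} -> seq 'I_n -> Prop :=
| nd_empty : nd_order e set0 [::]
| nd_step (U S A B : {set 'I_n}) (sA sB sS : seq 'I_n) :
    U != set0 ->
    bal_sep_in e U S A B ->
    (forall S', balanced_sep_in e U S' -> #|S| <= #|S'|) ->
    nd_order e A sA ->
    nd_order e B sB ->
    perm_eq sS (enum S) ->
    nd_order e U (sA ++ sB ++ sS).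

Definition nested_dissection_order (n : nat) (e : rel 'I_n) (s : seq 'I_n) : Prop :=
  nd_order e setT s.

Definition contract (n : nat) (E : rel 'I_n) (v : 'I_n) : rel 'I_n :=
  fun x y => [&& x != v, y != v & E x y || [&& E x v, E y v & x != y]].

(* Edge relation of G*_pi: union of edges of all core graphs obtained by
   contracting the vertices of s in order. *)
Fixpoint star_graph (n : nat) (E : rel 'I_n) (s : seq 'I_n) : rel 'I_n :=
  fun x y => E x y || (if s is v :: s' then star_graph (contract E v) s' x y else false).

Definition up_graph (n : nat) (e : rel 'I_n) (s : seq 'I_n) : rel 'I_n :=
  fun x y => star_graph e s x y && (index x s < index y s).

Definition ss_vertices (n : nat) (e : rel 'I_n) (s : seq 'I_n) (v : 'I_n) : {set 'I_n} :=
  [set y | connect (up_graph e s) v y].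

Definition ss_arcs (n : nat) (e : rel 'I_n) (s : seq 'I_n) (v : 'I_n) : {set 'I_n * 'I_n} :=
  [set p | [&& p.1 \in ss_vertices e s v, p.2 \in ss_vertices e s v & up_graph e s p.1 p.2]].

Definition max_ss_vertices (n : nat) (e : rel 'I_n) (s : seq 'I_n) : nat :=
  \max_(v : 'I_n) #|ss_vertices e s v|.
Definition max_ss_arcs (n : nat) (e : rel 'I_n) (s : seq 'I_n) : nat :=
  \max_(v : 'I_n) #|ss_arcs e s v|.
Definition avg_ss_vertices (n : nat) (e : rel 'I_n) (s : seq 'I_n) : R :=
  Rdiv (INR (\sum_(v : 'I_n) #|ss_vertices e s v|)) (INR n).
Definition avg_ss_arcs (n : nat) (e : rel 'I_n) (s : seq 'I_n) : R :=
  Rdiv (INR (\sum_(v : 'I_n) #|ss_arcs e s v|)) (INR n).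

Definition graph_class := forall n : nat, rel 'I_n -> Prop.

(* Closed under taking subgraphs (up to isomorphism): if H embeds injectively
   into G (edges to edges) and G is in K, then H is in K. *)
Definition subgraph_closed (K : graph_class) : Prop :=
  forall (n m : nat) (e : rel 'I_n) (e' : rel 'I_m) (f : 'I_m -> 'I_n),
    simple_graph e -> simple_graph e' -> injective f ->
    (forall x y, e' x y -> e (f x) (f y)) ->
    K n e -> K m e'.

Definition small_separators (K : graph_class) (alpha c : R) : Prop :=
  forall (h : nat) (e : rel 'I_h), simple_graph e -> K h e ->
    exists S, balanced_sep e S /\ Rle (INR #|S|) (Rmult c (rpow (INR h) alpha)).

(* Main.v *)
Require Import Defs.
From Stdlib Require Import Reals Lra.
Local Open Scope R_scope.


Lemma div_le_aux x y nn C : 0 < nn -> x <= C * y -> x / nn <= C * (y / nn).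
Proof.
intros hn h. unfold Rdiv. replace (C * (y * / nn)) with ((C * y) * / nn) by ring.
apply Rmult_le_compat_r; [apply Rlt_le, Rinv_0_lt_compat; lra | lra].
Qed.

Lemma final_real (Kr c' a X m q nn Vn SVn An SAn Vp SVp Ap SAp u : R) :
  0 < c' -> 0 < a -> a * c' = Kr -> 0 < X -> c' * X <= m -> 2 <= c' * X -> 0 < nn -> nn < 3 * q ->
  0 <= Vn -> Vn <= Kr * X -> SVn <= nn * Vn -> An <= Vn * Vn -> SAn <= nn * An ->
  m <= Vp -> q * m <= SVp -> 2 * u + m = m * m -> u <= Ap -> q * u <= SAp ->
  Vn <= 12 * (a + 1) ^ 2 * Vp /\ An <= 12 * (a + 1) ^ 2 * Ap /\
  SVn / nn <= 12 * (a + 1) ^ 2 * (SVp / nn) /\ SAn / nn <= 12 * (a + 1) ^ 2 * (SAp / nn).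
Proof.
intros hc ha hac hX hm h2 hn hq hV0 hV hSV hA hSA hVp hSVp hu hAp hSAp.
set (C := 12 * (a + 1) ^ 2).
assert (hm2 : 2 <= m) by lra.
assert (hKX : Kr * X <= a * m) by (rewrite <- hac; nra).
assert (hVm : Vn <= a * m) by lra.
assert (hCa : 4 * a <= C) by (unfold C; nra).
assert (hC4 : a * a <= C / 4) by (unfold C; nra).
assert (hq0 : 0 < q) by lra.
assert (hu4 : m * m / 4 <= u) by nra.
assert (hm0 : 0 < m) by lra.
assert (hA2 : An <= a * m * (a * m)) by nra.
assert (hC0 : 0 < C) by (unfold C; nra).
split; [|split; [|split]].
- assert (a * m <= C * m) by (apply Rmult_le_compat_r; lra).
  assert (C * m <= C * Vp) by (apply Rmult_le_compat_l; lra). lra.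
- assert (H0 : a * a * (m * m) <= C / 4 * (m * m)) by (apply Rmult_le_compat_r; [nra|lra]).
  assert (a * m * (a * m) <= C * (m * m / 4)).
  { replace (a*m*(a*m)) with (a*a*(m*m)) by ring. replace (C*(m*m/4)) with (C/4*(m*m)) by field. lra. }
  assert (C * (m * m / 4) <= C * u) by (apply Rmult_le_compat_l; lra).
  assert (C * u <= C * Ap) by (apply Rmult_le_compat_l; lra). lra.
- apply div_le_aux; [lra|].
  assert (h1 : SVn <= nn * (a * m)) by nra.
  assert (nn*(a*m) <= 3*q*(a*m)) by (apply Rmult_le_compat_r; nra).
  assert (3*a*(q*m) <= C*(q*m)) by (apply Rmult_le_compat_r; nra).
  assert (h2' : nn * (a * m) <= C * (q * m)).
  { replace (3*q*(a*m)) with (3*a*(q*m)) in * by ring. lra. }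
  assert (C * (q * m) <= C * SVp) by (apply Rmult_le_compat_l; lra). lra.
- apply div_le_aux; [lra|].
  assert (h1 : SAn <= nn * (a * m * (a * m))) by nra.
  assert (hC12 : a * a <= C / 12) by (unfold C; nra).
  assert (nn*(a*m*(a*m)) <= 3*q*(a*m*(a*m))) by (apply Rmult_le_compat_r; nra).
  assert (3*(a*a)*(q*(m*m)) <= C/4*(q*(m*m))) by (apply Rmult_le_compat_r; nra).
  assert (C/4*(q*(m*m)) <= C*(q*u)).
  { replace (C/4*(q*(m*m))) with (C*(q*(m*m/4))) by field. apply Rmult_le_compat_l; [lra|]. apply Rmult_le_compat_l; lra. }
  assert (h2' : nn * (a * m * (a * m)) <= C * (q * u)).
  { replace (3*q*(a*m*(a*m))) with (3*(a*a)*(q*(m*m))) in * by ring. lra. }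
  assert (C * (q * u) <= C * SAp) by (apply Rmult_le_compat_l; lra). lra.
Qed.

Definition Cof (a : R) : R := 12 * (a + 1) ^ 2.

Lemma final_real' (Kr c' a X m q nn Vn SVn An SAn Vp SVp Ap SAp u : R) :
  0 < c' -> 0 < a -> a * c' = Kr -> 0 < X -> c' * X <= m -> 2 <= c' * X -> 0 < nn -> nn < 3 * q ->
  0 <= Vn -> Vn <= Kr * X -> SVn <= nn * Vn -> An <= Vn * Vn -> SAn <= nn * An ->
  m <= Vp -> q * m <= SVp -> 2 * u + m = m * m -> u <= Ap -> q * u <= SAp ->
  Vn <= Cof a * Vp /\ An <= Cof a * Ap /\
  SVn / nn <= Cof a * (SVp / nn) /\ SAn / nn <= Cof a * (SAp / nn).
Proof. unfold Cof; apply final_real. Qed.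

Lemma step_real (c Kr r0 s rA rB rU : R) :
  0 < Kr -> 0 < r0 -> r0 < 1 -> Kr * (1 - r0) = c -> 0 <= rU ->
  s <= c * rU -> rA <= r0 * rU -> rB <= r0 * rU ->
  s + Kr * rA <= Kr * rU /\ s + Kr * rB <= Kr * rU /\ s <= Kr * rU.
Proof.
intros hK h0 h1 hc hU hs hA hB.
assert (Kr * rA <= Kr * (r0 * rU)) by (apply Rmult_le_compat_l; lra).
assert (Kr * rB <= Kr * (r0 * rU)) by (apply Rmult_le_compat_l; lra).
assert (c * rU + Kr * (r0 * rU) = Kr * rU) by (rewrite <- hc; ring).
assert (c * rU <= Kr * rU) by (rewrite <- hc; assert (0 <= Kr * r0 * rU) by (apply Rmult_le_pos; [apply Rmult_le_pos|]; lra); nra).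
lra.
Qed.

Lemma INR_lt3 (a b : nat) : (a < 3 * b)%nat -> INR a < 3 * INR b.
Proof. intro h; apply lt_INR in h; rewrite mult_INR in h; simpl in h; lra. Qed.

Lemma INR_eq2 (u m : nat) : (2 * u + m = m * m)%nat -> 2 * INR u + INR m = INR m * INR m.
Proof. intro h; apply (f_equal INR) in h; rewrite plus_INR, !mult_INR in h; simpl in h; lra. Qed.

Lemma INR_lemul (x y z : nat) : (x * y <= z)%nat -> INR x * INR y <= INR z.
Proof. intro h; apply le_INR in h; rewrite mult_INR in h; exact h. Qed.

Lemma INR_lemul' (x y z : nat) : (z <= x * y)%nat -> INR z <= INR x * INR y.
Proof. intro h; apply le_INR in h; rewrite mult_INR in h; exact h. Qed.

Local Close Scope R_scope.

From mathcomp Require Import all_boot zify.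
Set Implicit Arguments. Unset Strict Implicit. Unset Printing Implicit Defensive.


Inductive walk (T : Type) (e : T -> T -> bool) (D : T -> bool) : T -> T -> Prop :=
| wk1 x y : e x y -> walk e D x y
| wkc x z y : e x z -> D z -> walk e D z y -> walk e D x y.

Lemma walk_mono T (e : T -> T -> bool) (D D' : T -> bool) x y :
  (forall z, D z -> D' z) -> walk e D x y -> walk e D' x y.
Proof. move=> H; elim=> [a b|a z b] *; [exact: wk1| apply: wkc; eauto]. Qed.

Lemma walk_cat T (e : T -> T -> bool) (D : T -> bool) x z y :
  walk e D x z -> D z -> walk e D z y -> walk e D x y.
Proof.
move=> W; elim: W y => [a b eab|a c b eac Dc _ IH] y Db Wy.
  exact: wkc Wy.
exact: (wkc eac Dc (IH _ Db Wy)).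
Qed.

Lemma walk_snoc T (e : T -> T -> bool) (D : T -> bool) x z y :
  walk e D x z -> D z -> e z y -> walk e D x y.
Proof. move=> W Dz ezy; apply: (walk_cat W Dz); exact: wk1. Qed.

Lemma walk_sym T (e : T -> T -> bool) (D : T -> bool) x y :
  symmetric e -> walk e D x y -> walk e D y x.
Proof.
move=> se; elim=> [a b eab|a c b eac Dc _ IH]; first by apply: wk1; rewrite se.
by apply: walk_snoc IH Dc _; rewrite se.
Qed.

Lemma walk_first (T : eqType) (e : T -> T -> bool) (D : T -> bool) x y :
  walk e D x y -> walk e (fun z => D z && (z != y)) x y.
Proof.
elim=> [a b eab|a c b eac Dc _ IH]; first exact: wk1.
case: (eqVneq c b) => [Ecb|ncb]; first by apply: wk1; rewrite -Ecb.
by apply: wkc eac _ IH; rewrite Dc.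
Qed.

Lemma walk_last (T : eqType) (e : T -> T -> bool) (D D' : T -> bool) v a y :
  (forall z, D' z -> z = v \/ D z) ->
  walk e D' a y -> walk e D a y \/ walk e D v y.
Proof.
move=> HD; elim=> [b c ebc|b z c ebz D'z _ IH]; first by left; exact: wk1.
case: IH => [W|W]; last by right.
case: (HD _ D'z) => [Ez|Dz]; first by right; rewrite -Ez.
by left; exact: wkc ebz Dz W.
Qed.

Lemma walk_split (T : eqType) (e : T -> T -> bool) (D D' : T -> bool) v x y :
  (forall z, D' z -> z = v \/ D z) ->
  walk e D' x y -> walk e D x y \/ (walk e D x v /\ walk e D v y).
Proof.
move=> HD; elim=> [b c ebc|b z c ebz D'z Wzc IH]; first by left; exact: wk1.
case: (HD _ D'z) => [Ez|Dz].
  right; split; first by apply: wk1; rewrite -Ez.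
  by case: (walk_last HD Wzc) => W; [rewrite -Ez|].
case: IH => [W|[W1 W2]]; first by left; exact: wkc ebz Dz W.
by right; split=> //; exact: wkc ebz Dz W1.
Qed.

Definition Ec (n : nat) (E : rel 'I_n) (P : seq 'I_n) : rel 'I_n :=
  foldl (fun E v => contract E v) E P.

Lemma Ec_rcons n (E : rel 'I_n) P v : Ec E (rcons P v) = contract (Ec E P) v.
Proof. by rewrite /Ec foldl_rcons. Qed.

Lemma Ec_sym n (E : rel 'I_n) P : symmetric E -> symmetric (Ec E P).
Proof.
elim/last_ind: P => [//|P v IH] sE x y; rewrite !Ec_rcons /contract.
rewrite (IH sE x y) (IH sE x v) (IH sE y v) (eq_sym x y).
by case: (x != v); case: (y != v); case: (Ec E P v x); case: (Ec E P v y); rewrite ?andbF.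
Qed.

Lemma Ec_char n (e : rel 'I_n) P : simple_graph e -> uniq P -> forall x y,
  Ec e P x y <-> [/\ x \notin P, y \notin P, x != y & walk e (fun z => z \in P) x y].
Proof.
move=> [se ie]; elim/last_ind: P => [|P v IH] uP x y.
  rewrite /Ec /=; split.
    move=> exy; split=> //; last exact: wk1.
    by apply/eqP=> Exy; move: exy; rewrite Exy ie.
  by case=> _ _ _; case.
have uP' : uniq P by move: uP; rewrite rcons_uniq => /andP[].
have vP : v \notin P by move: uP; rewrite rcons_uniq => /andP[].
rewrite Ec_rcons /contract !mem_rcons !in_cons.
have HD : forall z, z \in rcons P v -> z = v \/ z \in P.
  by move=> z; rewrite mem_rcons in_cons => /orP[/eqP|]; auto.
have HD' : forall z, z \in P -> z \in rcons P v by move=> z; rewrite mem_rcons in_cons orbC => ->.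
split.
  case/and3P=> xv yv /orP[/(IH uP') [xP yP nxy W]|/and3P[/(IH uP') [xP _ _ W1] /(IH uP') [yP _ _ W2] nxy]].
    by rewrite negb_or xv xP negb_or yv yP; split=> //; exact: walk_mono HD' W.
  rewrite negb_or xv xP negb_or yv yP; split=> //.
  apply: (@walk_cat _ _ _ _ v); first exact: walk_mono HD' W1.
    by rewrite mem_rcons mem_head.
  by apply: walk_mono HD' _; apply: walk_sym.
rewrite !negb_or => -[/andP[xv xP] /andP[yv yP] nxy W].
rewrite xv yv /=.
case: (walk_split HD W) => [W'|[W1 W2]].
  by apply/orP; left; apply/(IH uP').
apply/orP; right; rewrite nxy andbT; apply/andP; split; apply/(IH uP').
  by split.
by split=> //; exact: walk_sym.
Qed.



Lemma SG1 n (E : rel 'I_n) s x y : star_graph E s x y -> exists i, Ec E (take i s) x y.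
Proof.
elim: s E => [|v s IH] E /=; first by rewrite orbF => H; exists 0.
case/orP=> [H|/IH [i H]]; first by exists 0.
by exists i.+1.
Qed.

Lemma SG2 n (E : rel 'I_n) s x y i : Ec E (take i s) x y -> star_graph E s x y.
Proof.
elim: s E i => [|v s IH] E [|i] /=; rewrite ?orbF // => H; first by rewrite H.
by rewrite (IH _ _ H) orbT.
Qed.

Lemma star_sound n (e : rel 'I_n) s x y : simple_graph e -> uniq s -> (forall z, z \in s) ->
  star_graph e s x y ->
  x != y /\ walk e (fun z => index z s < minn (index x s) (index y s)) x y.
Proof.
move=> sg us alls /SG1 [i] /(Ec_char sg (take_uniq i us)) [xP yP nxy W].
split=> //; apply: walk_mono W => z zP.
have := index_ltn zP.
move: xP yP; rewrite !in_take // -!leqNgt => hx hy hz.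
by rewrite leq_min (leq_trans hz hx) (leq_trans hz hy).
Qed.

Lemma star_complete n (e : rel 'I_n) s x y : simple_graph e -> uniq s -> (forall z, z \in s) ->
  x != y -> walk e (fun z => index z s < minn (index x s) (index y s)) x y ->
  star_graph e s x y.
Proof.
move=> sg us alls nxy W.
apply: (@SG2 _ _ _ _ _ (minn (index x s) (index y s))).
apply/(Ec_char sg (take_uniq _ us)); split=> //.
- by rewrite in_take // ltnNge geq_minl.
- by rewrite in_take // ltnNge geq_minr.
- by apply: walk_mono W => z hz; rewrite in_take.
Qed.

Lemma up_arc n (e : rel 'I_n) s x y : simple_graph e -> uniq s -> (forall z, z \in s) ->
  index x s < index y s -> walk e (fun z => index z s < index x s) x y ->
  connect (up_graph e s) x y.
Proof.
move=> sg us alls lxy W; apply: connect1; rewrite /up_graph lxy andbT.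
apply: star_complete => //.
  by apply/eqP=> E; move: lxy; rewrite E ltnn.
by rewrite (minn_idPl (ltnW lxy)).
Qed.

Lemma reach_lemma n (e : rel 'I_n) s v w : simple_graph e -> uniq s -> (forall z, z \in s) ->
  index v s < index w s -> walk e (fun z => index z s < index w s) v w ->
  connect (up_graph e s) v w.
Proof.
move=> sg us alls lvw W.
suff H : forall a b, walk e (fun z => index z s < index w s) a b -> b = w -> forall m,
  connect (up_graph e s) v m -> index m s < index w s ->
  (m = a \/ (index a s < index m s /\ walk e (fun z => index z s < index m s) m a)) ->
  connect (up_graph e s) v w.
  by apply: (H v w W erefl v) => //; left.
move=> a b'; elim=> {a b'} [a b eab|a z b eaz Dz Wzb IH] Eb m cvm lmw st; subst b.
-
  apply: (connect_trans cvm); apply: up_arc => //.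
  case: st => [Ema|[lam Wma]]; first by apply: wk1; rewrite Ema.
  exact: walk_snoc Wma lam eab.
- have Wmz : walk e (fun z => index z s < index m s) m z.
    case: st => [Ema|[lam Wma]]; first by apply: wk1; rewrite Ema.
    exact: walk_snoc Wma lam eaz.
  case: (ltngtP (index z s) (index m s)) => [lzm|lmz|Ezm].
  + by apply: (IH erefl m) => //; right.
  + apply: (IH erefl z) => //; last by left.
    exact: (connect_trans cvm (up_arc sg us alls lmz Wmz)).
  + have Ezm' : z = m by apply: (index_inj z (alls z) (alls m)).
    by apply: (IH erefl m) => //; left; rewrite Ezm'.
Qed.



Lemma conn_inv (T : finType) (R R' : rel T) (X : pred T) x y :
  X x -> (forall u w, X u -> R u w -> X w /\ R' u w) -> connect R x y -> connect R' x y /\ X y.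
Proof.
move=> Xx H /connectP [p pth ->].
elim: p x Xx pth => [|z p IH] x Xx /=; first by rewrite connect0.
case/andP=> Rxz pth; have [Xz R'xz] := H _ _ Xx Rxz.
have [c Xl] := IH _ Xz pth; split=> //.
exact: connect_trans (connect1 R'xz) c.
Qed.

Lemma conn_walk (T : finType) (R : rel T) (e : rel T) (D : T -> bool) v w :
  (forall a b, R a b -> e a b && D b) -> connect R v w -> v != w -> walk e D v w.
Proof.
move=> H /connectP [p pth ->]; elim: p v pth => [|z p IH] v /=; first by rewrite eqxx.
case/andP=> /H /andP[evz Dz] pth _.
case: p IH pth => [|z' p] IH pth /=; first exact: wk1.
case: (eqVneq z (last z' p)) => [Ez|nz].
  by apply: wk1; rewrite -Ez.
by apply: wkc evz Dz _; apply: IH.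
Qed.

Definition eW (T : finType) (e : rel T) (W : {set T}) : rel T :=
  fun u w => [&& e u w, u \in W & w \in W].

Definition compW (T : finType) (e : rel T) (W : {set T}) (y : T) : {set T} :=
  [set z | connect (eW e W) y z].

Lemma eW_sym (T : finType) (e : rel T) W : symmetric e -> symmetric (eW e W).
Proof. by move=> se x y; rewrite /eW se; case: (x \in W); case: (y \in W); rewrite ?andbF ?andbT. Qed.

Lemma group_lemma (T : finType) (e : rel T) (W : {set T}) (k t0 : nat) :
  symmetric e -> 0 < t0 ->
  (forall y, y \in W -> #|compW e W y| <= k) ->
  exists A : {set T}, [/\ A \subset W,
     (forall u w, u \in A -> w \in W :\: A -> ~~ e u w),
     #|A| < t0 + k & (t0 <= #|A| \/ W \subset A)].
Proof.
move=> se t0p Hk.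
suff H : forall d (A : {set T}), #|W :\: A| <= d -> A \subset W ->
  (forall u w, u \in A -> w \in W :\: A -> ~~ e u w) -> #|A| < t0 + k ->
  exists A : {set T}, [/\ A \subset W,
     (forall u w, u \in A -> w \in W :\: A -> ~~ e u w),
     #|A| < t0 + k & (t0 <= #|A| \/ W \subset A)].
  apply: (H _ set0 (leqnn _)); rewrite ?sub0set ?cards0 //; last by lia.
  by move=> u w; rewrite inE.
elim=> [|d IH] A sz sAW cl lt.
  exists A; split=> //; right.
  by move: sz; rewrite leqn0 cards_eq0 setD_eq0.
case: (leqP t0 #|A|) => [le|ltA]; first by exists A; split=> //; left.
case: (set_0Vmem (W :\: A)) => [E0|[y yWA]].
  by exists A; split=> //; right; rewrite -setD_eq0 E0.
have yW : y \in W by move: yWA; rewrite inE => /andP[].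
have yA : y \notin A by move: yWA; rewrite inE => /andP[].
set C := compW e W y.
have CW : C \subset W.
  apply/subsetP=> z; rewrite inE => c.
  have [] // := @conn_inv _ (eW e W) (eW e W) (fun z => z \in W) y z yW _ c.
  by move=> u w _ E; move/and3P: (E) => [_ _ ->].
have cl' : forall u w, u \in C -> w \in W -> e u w -> w \in C.
  move=> u w cu wW euw; have cuW := subsetP CW u cu; rewrite /C /compW inE in cu *; rewrite inE.
  by apply: connect_trans cu (connect1 _); rewrite /eW euw wW cuW.
have CA : [disjoint C & A].
  rewrite -setI_eq0; apply/eqP/setP=> z; rewrite !inE.
  apply/negbTE/negP=> /andP[cz zA].
  have cz' : connect (eW e W) z y by rewrite (sym_connect_sym (eW_sym W se)).
  have HA : forall u w, u \in A -> eW e W u w -> w \in A /\ eW e W u w.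
    move=> u w uA E; split=> //; move/and3P: E => [euw _ wW].
    apply/negPn/negP=> wA; have := cl u w uA; rewrite inE wA wW euw; by move/(_ isT).
  have [_ yA'] := @conn_inv _ (eW e W) (eW e W) (fun z => z \in A) z y zA HA cz'.
  by rewrite yA' in yA.
have yC : y \in C by rewrite /C /compW inE connect0.
have h1 : #|W :\: (A :|: C)| <= d.
  rewrite -ltnS; apply: leq_trans sz; apply: proper_card.
  rewrite properE; apply/andP; split.
    by apply/subsetP=> z; rewrite !inE negb_or => /andP[/andP[-> _] ->].
  by apply/subsetPn; exists y => //; rewrite !inE connect0 orbT.
have h2 : A :|: C \subset W by rewrite subUset sAW CW.
have h3 : forall u w, u \in A :|: C -> w \in W :\: (A :|: C) -> ~~ e u w.
  move=> u w; rewrite in_setU in_setD in_setU negb_or => /orP[uA|uC] /andP[/andP[wA wC] wW].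
    by apply: cl uA _; rewrite in_setD wA wW.
  by apply/negP=> euw; move: wC; rewrite (cl' u w uC wW euw).
have h4 : #|A :|: C| < t0 + k.
  have := cardsUI A C; rewrite setIC (disjoint_setI0 CA) cards0 addn0 => ->.
  have := Hk y yW; rewrite -/C; lia.
have [A' [H1 H2 H3 H4]] := IH (A :|: C) h1 h2 h3 h4.
by exists A'; split.
Qed.



Definition eL n (e : rel 'I_n) (s : seq 'I_n) r : rel 'I_n :=
  fun u w => [&& e u w, index u s < r & index w s < r].
Definition compL n (e : rel 'I_n) s r x : {set 'I_n} := [set y | connect (eL e s r) x y].

Lemma vo_facts n (s : seq 'I_n) : vertex_order s ->
  [/\ uniq s, forall z, z \in s, size s = n & forall z, index z s < n].
Proof.
move=> vo; have us : uniq s by rewrite (perm_uniq vo) enum_uniq.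
have alls : forall z, z \in s by move=> z; rewrite (perm_mem vo) mem_enum.
have ss : size s = n by rewrite (perm_size vo) size_enum_ord.
by split=> // z; move: (index_mem z s); rewrite alls ss.
Qed.

Lemma lower_struct n (e : rel 'I_n) s : simple_graph e -> connected_graph e -> vertex_order s -> 0 < n ->
  exists Q M : {set 'I_n}, [/\ n < 3 * #|Q|, balanced_sep e M,
    (forall v, v \in Q -> M \subset ss_vertices e s v) &
    (forall x y, x \in M -> y \in M -> x != y -> star_graph e s x y)].
Proof.
move=> sg conn vo n0; have [se ie] := sg.
have [us alls ss ltn] := vo_facts vo.
pose Pr r := [exists x, (index x s < r) && (n < 3 * #|compL e s r x|)].
have Prn : Pr n.
  apply/existsP; exists (Ordinal n0); rewrite ltn /=.
  suff -> : compL e s n (Ordinal n0) = setT by rewrite cardsT card_ord; lia.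
  apply/setP=> y; rewrite !inE; apply: connect_sub (conn _ y) => u w euw.
  by apply: connect1; rewrite /eL euw !ltn.
have Pn : exists r, Pr r by exists n.
case: (ex_minnP Pn) => r Pr_r rmin.
have r0 : 0 < r.
  case: r Pr_r {rmin} => // /existsP [x]; by rewrite ltn0.
have rn : r <= n by apply: rmin.
have notP : ~~ Pr r.-1.
  by apply/negP=> H; have := rmin _ H; lia.
pose t := nth (Ordinal n0) s r.-1.
have it : index t s = r.-1 by rewrite /t index_uniq // ss; lia.
case/existsP: Pr_r => x /andP[xr Qbig].
set Q := compL e s r x.
have QL : forall y, y \in Q -> index y s < r.
  move=> y; rewrite inE => c.
  have [] // := @conn_inv _ (eL e s r) (eL e s r) (fun z => index z s < r) x y xr _ c.
  by move=> u w _ E; move/and3P: (E) => [_ _ ->].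
have Qcl : forall u w, u \in Q -> index w s < r -> e u w -> w \in Q.
  move=> u w uQ wr euw; have ur := QL u uQ; move: uQ; rewrite !inE => c.
  by apply: connect_trans c (connect1 _); rewrite /eL euw ur wr.
have lt1 : forall y, index y s < r -> y != t -> index y s < r.-1.
  move=> y yr nyt.
  have : index y s != index t s by apply: contra nyt => /eqP E; apply/eqP; apply: (index_inj y (alls y) (alls t) E).
  rewrite it; lia.
have QL1 : forall y, y \in Q -> y != t -> index y s < r.-1.
  by move=> y yQ; apply: lt1; apply: QL.
have tQ : t \in Q.
  apply/negPn/negP=> ntQ; move/negP: notP; apply; apply/existsP; exists x.
  have xt : x != t by apply: contra ntQ => /eqP <-; rewrite inE connect0.
  rewrite (QL1 x _ xt) ?inE ?connect0 //=.
  apply: leq_trans Qbig _; rewrite leq_mul2l /=; apply: subset_leq_card.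
  apply/subsetP=> y yQ; rewrite inE; move: (yQ); rewrite inE => c.
  have HX : forall u w, u \in Q -> eL e s r u w -> w \in Q /\ eL e s r.-1 u w.
    move=> u w uQ E; move/and3P: (E) => [euw _ wr].
    have wQ := Qcl u w uQ wr euw.
    have ut : u != t by apply: contra ntQ => /eqP <-.
    have wt : w != t by apply: contra ntQ => /eqP <-.
    by split=> //; rewrite /eL euw QL1 // QL1.
  have [] // := @conn_inv _ (eL e s r) (eL e s r.-1) (fun z => z \in Q) x y _ HX c.
  by rewrite inE connect0.
pose N := [set w | (w \notin Q) && [exists u in Q, e u w]].
have NQ : forall w, w \in N -> r <= index w s.
  move=> w; rewrite inE => /andP[wQ /existsP[u /andP[uQ euw]]].
  by rewrite leqNgt; apply: contra wQ => wr; apply: Qcl uQ wr euw.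
have NnQ : forall w, w \in N -> w \notin Q by move=> w; rewrite inE => /andP[].
pose M := t |: N.
have WQ : forall v u, v \in Q -> u \in Q -> v != u -> walk e (fun z => index z s < r) v u.
  move=> v u; rewrite !inE => cv cu nvu; apply: (@conn_walk _ (eL e s r)) => //.
    by move=> a b /and3P[-> _ ->].
  by apply: connect_trans cu; rewrite (sym_connect_sym _) //; move=> a b; rewrite /eL se; 
     case: (index a s < r); case: (index b s < r); rewrite ?andbF ?andbT.
have WQN : forall v w, v \in Q -> w \in N -> walk e (fun z => index z s < r) v w.
  move=> v w vQ; rewrite inE => /andP[_ /existsP[u /andP[uQ euw]]].
  case: (eqVneq v u) => [->|nvu]; first exact: wk1.
  exact: walk_snoc (WQ v u vQ uQ nvu) (QL u uQ) euw.
have Mreach : forall v, v \in Q -> M \subset ss_vertices e s v.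
  move=> v vQ; apply/subsetP=> z; rewrite /M in_setU1 => /orP[/eqP ->|zN]; rewrite inE.
    case: (eqVneq v t) => [->|nvt]; first exact: connect0.
    apply: reach_lemma => //; first by rewrite it QL1.
    apply: walk_mono (walk_first (WQ v t vQ tQ nvt)) => z' /andP[lz nz].
    by rewrite it lt1.
  apply: reach_lemma => //; first exact: leq_trans (QL v vQ) (NQ z zN).
  by apply: walk_mono (WQN v z vQ zN) => z' lz; apply: leq_trans lz (NQ z zN).
have tw : forall w, w \in N -> walk e (fun z => index z s < minn (index t s) (index w s)) t w.
  move=> w wN.
  have HD : forall z, index z s < r -> z = t \/ (fun z => (index z s < r) && (z != t)) z.
    by move=> z lz; case: (eqVneq z t) => [->|nzt]; [left|right; rewrite lz].
  have W1 : walk e (fun z => (index z s < r) && (z != t)) t w.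
    by case: (walk_last HD (WQN t w tQ wN)).
  apply: walk_mono W1 => z /andP[lz nzt].
  have zQ' := lt1 z lz nzt.
  have := NQ w wN; rewrite it; lia.
have Mclique : forall x y, x \in M -> y \in M -> x != y -> star_graph e s x y.
  move=> a b; rewrite /M !in_setU1 => /orP[/eqP ->|aN] /orP[/eqP ->|bN] nab.
  - by rewrite eqxx in nab.
  - exact: star_complete (tw b bN).
  - by apply: star_complete => //; rewrite minnC; apply: walk_sym => //; exact: tw.
  - apply: star_complete => //.
    move: (aN); rewrite inE => /andP[_ /existsP[u /andP[uQ eua]]].
    apply: (@wkc _ _ _ a u b); first by rewrite se.
      by apply: leq_trans (QL u uQ) _; rewrite leq_min !NQ.
    apply: walk_mono (WQN u b uQ bN) => z lz.
    by apply: leq_trans lz _; rewrite leq_min !NQ.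
exists Q, M; split=> //.
have tM : t \in M by rewrite /M in_setU1 eqxx.
have NM : forall w, w \in N -> w \in M by move=> w wN; rewrite /M in_setU1 wN orbT.
pose W := ~: M.
pose R := W :\: Q.
have RW : forall z, z \in R -> z \in W /\ z \notin Q by move=> z; rewrite /R in_setD => /andP[].
have adjN : forall u w, u \in Q -> w \notin Q -> e u w -> w \in N.
  by move=> u w uQ wQ euw; rewrite inE wQ /=; apply/existsP; exists u; rewrite uQ.
have noedge : forall u w, u \in Q -> w \in R -> ~~ e u w.
  move=> u w uQ /RW [wW wQ]; apply/negP=> euw.
  by move: wW; rewrite /W in_setC (NM _ (adjN u w uQ wQ euw)).
have cQ : #|Q| + #|~: Q| = n by rewrite cardsC card_ord.
have cR : #|R| <= #|~: Q|.
  by apply: subset_leq_card; apply/subsetP=> z /RW [_ ]; rewrite in_setC.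
have WM : setT :\: M = W by rewrite setTD.
case: (leqP (3 * #|Q|) (2 * n)) => [small|big].
  exists (Q :\ t), R; split.
  - exact: subsetT.
  - rewrite WM; apply/setP=> z; rewrite in_setU in_setD1 /R /W in_setD !in_setC /M in_setU1.
    case zQ: (z \in Q) => //=.
    have zN : z \notin N by apply/negP=> /NnQ; rewrite zQ.
      by rewrite (negbTE zN) !orbF andbT.
    by rewrite andbF.
  - rewrite -setI_eq0; apply/eqP/setP=> z; rewrite in_setI in_setD1 in_set0.
    by apply/negbTE/negP=> /andP[/andP[_ zQ] /RW [_ ]]; rewrite zQ.
  - move=> u w /setD1P [_ uQ] wR; exact: noedge.
  - apply/andP; split; rewrite cardsT card_ord.
      by apply: leq_trans small; rewrite leq_mul2l /=; apply: subset_leq_card; apply: subD1set.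
    have h : #|R| + #|Q| <= n by apply: (leq_trans (leq_add cR (leqnn #|Q|))); rewrite addnC cQ.
    move: Qbig h; rewrite -/Q; move: (#|Q|) (#|R|) => a b; lia.
have pieces : forall y, y \in W -> #|compW e W y| <= n %/ 3.
  move=> y yW.
  suff : 3 * #|compW e W y| <= n by lia.
  case yQ: (y \in Q).
    have yt : y != t by apply/eqP=> Eyt; move: yW; rewrite /W in_setC Eyt tM.
    have HX : forall u w, u \in Q :\ t -> eW e W u w -> w \in Q :\ t /\ eL e s r.-1 u w.
      move=> u w /setD1P [ut uQ] /and3P[euw _ wW].
      have wQ : w \in Q.
        apply/negPn/negP=> wQ; move: wW; rewrite /W in_setC (NM _ (adjN u w uQ wQ euw)) //.
      have wt : w != t by apply/eqP=> Ewt; move: wW; rewrite /W in_setC Ewt tM.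
      by rewrite in_setD1 wt wQ; split=> //; rewrite /eL euw !QL1.
    have sub : compW e W y \subset compL e s r.-1 y.
      apply/subsetP=> z; rewrite !inE => c.
      have [] // := @conn_inv _ (eW e W) (eL e s r.-1) (fun z => z \in Q :\ t) y z _ HX c.
      by rewrite in_setD1 yt yQ.
    apply: leq_trans (_ : 3 * #|compL e s r.-1 y| <= n).
      by rewrite leq_mul2l /=; apply: subset_leq_card.
    rewrite leqNgt; apply: contra notP => H; apply/existsP; exists y.
    by rewrite QL1 ?yQ.
  have yR : y \in R by rewrite /R in_setD yQ yW.
  have HX : forall u w, u \in R -> eW e W u w -> w \in R /\ eW e W u w.
    move=> u w /RW [uW uQ] E; move/and3P: (E) => [euw _ wW]; split=> //.
    rewrite /R in_setD wW andbT; apply/negP=> wQ.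
    by move: uW; rewrite /W in_setC (NM _ (adjN w u wQ uQ _)) // se.
  have sub : compW e W y \subset R.
    apply/subsetP=> z; rewrite inE => c.
    by have [] // := @conn_inv _ (eW e W) (eW e W) (fun z => z \in R) y z yR HX c.
  have := subset_leq_card sub; lia.
have [A [AW Acl Acard Aalt]] := @group_lemma _ e W (n %/ 3) ((n + 2) %/ 3) se ltac:(lia) pieces.
exists A, (W :\: A); split.
- exact: subsetT.
- rewrite WM; apply/setP=> z; rewrite in_setU in_setD.
  by case zA: (z \in A); rewrite /= ?andbT // (subsetP AW z zA).
- by rewrite -setI_eq0 setDE setICA setICr !setI0.
- exact: Acl.
- have cW : #|W| <= n by move: (max_card (mem W)); rewrite card_ord.
  have cD : #|W :\: A| = #|W| - #|A|.
    by rewrite cardsD (setIidPr AW).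
  rewrite cardsT card_ord; apply/andP; split.
    by move: Acard; move: (#|A|) => a; lia.
  case: Aalt => [le|sWA].
    by rewrite cD; move: le cW; move: (#|A|) (#|W|) => a b; lia.
  have -> : W :\: A = set0 by apply/eqP; rewrite setD_eq0.
  by rewrite cards0.
Qed.



Lemma nd_mem n (e : rel 'I_n) U sU : nd_order e U sU -> uniq sU /\ sU =i U.
Proof.
elim=> {U sU} [|U S A B sA sB sS _ [SU ABU dAB _ _] _ _ [uA mA] _ [uB mB] pS].
  by split=> // x; rewrite inE.
move/setP: ABU => ABU.
have mS : sS =i S by move=> x; rewrite (perm_mem pS) mem_enum.
have uS : uniq sS by rewrite (perm_uniq pS) enum_uniq.
have memU : forall x, (x \in U) = [|| x \in A, x \in B | x \in S].
  move=> x; have := ABU x; rewrite in_setU in_setD.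
  case xS: (x \in S) => /= E; first by rewrite (subsetP SU) ?orbT.
  by rewrite orbF E.
have AS : forall x, x \in A -> x \notin S.
  move=> x xA; have := ABU x; rewrite /= in_setU in_setD xA /=.
  by move/esym/andP=> [].
have BS : forall x, x \in B -> x \notin S.
  move=> x xB; have := ABU x; rewrite /= in_setU in_setD xB orbT /=.
  by move/esym/andP=> [].
split; last by move=> x; rewrite !mem_cat mA mB mS memU.
rewrite !cat_uniq uA uB uS /= andbT; apply/andP; split.
  apply/hasP=> -[x]; rewrite mem_cat mB mS mA => /orP[xB xA|xS xA].
    by rewrite (disjointFr dAB xA) in xB.
  by move: (AS x xA); rewrite xS.
apply/hasP=> -[x]; rewrite mS mB => xS xB.
by move: (BS x xB); rewrite xS.
Qed.

Lemma block_lt (T : eqType) (l r : seq T) a z :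
  uniq (l ++ r) -> a \in l -> z \in r -> index a (l ++ r) < index z (l ++ r).
Proof.
rewrite cat_uniq => /and3P[_ hlr _] al zr.
rewrite !index_cat al.
have zl : z \notin l by apply: contra hlr => zl; apply/hasP; exists z.
rewrite (negbTE zl); apply: (leq_trans _ (leq_addr _ _)); by rewrite index_mem.
Qed.

Lemma local_step n (e : rel 'I_n) s (W : {set 'I_n}) x y :
  simple_graph e -> uniq s -> (forall z, z \in s) -> x \in W ->
  (forall u w, u \in W -> w \notin W -> e u w -> index x s < index w s) ->
  up_graph e s x y -> y \in W \/ exists u, [/\ u \in W, y \notin W & e u y].
Proof.
move=> sg us alls xW HN /andP[st lxy].
have [_ Wk] := star_sound sg us alls st.
have Wk' : walk e (fun z => index z s < index x s) x y.
  by apply: walk_mono Wk => z lz; apply: leq_trans lz (geq_minl _ _).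
move: xW Wk'; move: {1 3}x => x' x'W Wk'.
elim: Wk' x'W => {x' y lxy st Wk} [a b eab|a z b eaz Dz _ IH] aW.
  by case bW: (b \in W); [left|right; exists a; split; rewrite ?bW].
apply: IH; apply/negPn/negP=> zW.
by have := HN a z aW zW eaz; rewrite ltnNge (ltnW Dz).
Qed.

Lemma region_inv n (e : rel 'I_n) s (U S C : {set 'I_n}) v y :
  simple_graph e -> uniq s -> (forall z, z \in s) ->
  (forall x, x \in C -> x \in U /\ x \notin S) -> S \subset U ->
  (forall u w, u \in C -> w \notin C -> e u w -> w \in S \/ w \notin U) ->
  (forall a z, a \in U -> a \notin S -> z \in S -> index a s < index z s) ->
  (forall u w, u \in U -> w \notin U -> e u w -> forall u', u' \in U -> index u' s < index w s) ->
  v \in C \/ v \in S -> connect (up_graph e s) v y -> y \in U -> y \in C \/ y \in S.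
Proof.
move=> sg us alls hC hSU hNC hbl hNU hv c yU.
pose X y := [|| y \in C, y \in S | [forall (u | u \in U), index u s < index y s]].
have Xv : X v by rewrite /X; case: hv => ->; rewrite ?orbT.
have step : forall x y, X x -> up_graph e s x y -> X y /\ up_graph e s x y.
  move=> x z Xx uxz; split=> //; have lxz : index x s < index z s by case/andP: uxz.
  case/or3P: Xx => [xC|xS|/forall_inP xa].
  - have [xU xS] := hC x xC.
    have HN : forall u w, u \in C -> w \notin C -> e u w -> index x s < index w s.
      move=> u w uC wC euw; case: (hNC u w uC wC euw) => [wS|wU].
        exact: hbl.
      by apply: hNU (proj1 (hC u uC)) wU euw x xU.
    case: (local_step sg us alls xC HN uxz) => [zC|[u [uC zC euz]]]; first by rewrite /X zC.
    case: (hNC u z uC zC euz) => [zS|zU]; first by rewrite /X zS orbT.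
    rewrite /X; apply/orP; right; apply/orP; right; apply/forall_inP => u' u'U.
    exact: hNU (proj1 (hC u uC)) zU euz u' u'U.
  - have xU := subsetP hSU x xS.
    have HN : forall u w, u \in U -> w \notin U -> e u w -> index x s < index w s.
      by move=> u w uU wU euw; apply: hNU uU wU euw x xU.
    case: (local_step sg us alls xU HN uxz) => [zU|[u [uU zU euz]]].
      case zS: (z \in S); first by rewrite /X zS orbT.
      by have := hbl z x zU (negbT zS) xS; rewrite ltnNge (ltnW lxz).
    rewrite /X; apply/orP; right; apply/orP; right; apply/forall_inP => u' u'U.
    exact: hNU uU zU euz u' u'U.
  - rewrite /X; apply/orP; right; apply/orP; right; apply/forall_inP => u' u'U.
    exact: ltn_trans (xa u' u'U) lxz.
have [_ Xy] := @conn_inv _ (up_graph e s) (up_graph e s) X v y Xv step c.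
case/or3P: Xy => [->|->|/forall_inP ya]; [by left|by right|].
by have := ya y yU; rewrite ltnn.
Qed.

Lemma card_sub_U n (X Y Z : {set 'I_n}) : X \subset Y :|: Z -> #|X| <= #|Y| + #|Z|.
Proof.
move=> sub; apply: leq_trans (subset_leq_card sub) _.
by rewrite cardsU leq_subr.
Qed.

Lemma nd_ind n (e : rel 'I_n) (F : nat -> R) :
  simple_graph e ->
  (forall U S A B, U != set0 -> bal_sep_in e U S A B ->
     (forall S', balanced_sep_in e U S' -> #|S| <= #|S'|) ->
     [/\ Rle (Rplus (INR #|S|) (F #|A|)) (F #|U|), Rle (Rplus (INR #|S|) (F #|B|)) (F #|U|) & Rle (INR #|S|) (F #|U|)]) ->
  forall U sU, nd_order e U sU -> forall pre post,
  uniq (pre ++ sU ++ post) -> (forall z, z \in pre ++ sU ++ post) ->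
  (forall u w, u \in U -> w \notin U -> e u w -> forall u', u' \in U ->
      index u' (pre ++ sU ++ post) < index w (pre ++ sU ++ post)) ->
  forall v, v \in U -> Rle (INR #|ss_vertices e (pre ++ sU ++ post) v :&: U|) (F #|U|).
Proof.
move=> sg Hstep U sU nd.
elim: nd => {U sU} [|U S A B sA sB sS hne hbal hmin ndA IHA ndB IHB pS] pre post us alls hNU v vU.
  by rewrite inE in vU.
have [F1 F2 F3] := Hstep U S A B hne hbal hmin.
have [se _] := sg.
move: (hbal) => [SU ABU dAB noAB _].
move/setP: ABU => ABU.
have [_ mA] := nd_mem ndA.
have [_ mB] := nd_mem ndB.
have mS : sS =i S by move=> x; rewrite (perm_mem pS) mem_enum.
set s := pre ++ (sA ++ sB ++ sS) ++ post.
have memU : forall x, (x \in U) = [|| x \in A, x \in B | x \in S].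
  move=> x; have := ABU x; rewrite in_setU in_setD.
  case xS: (x \in S) => /= E; first by rewrite (subsetP SU) ?orbT.
  by rewrite orbF E.
have AS : forall x, x \in A -> x \in U /\ x \notin S.
  move=> x xA; have := ABU x; rewrite in_setU in_setD xA /=.
  by move/esym/andP=> [].
have BS : forall x, x \in B -> x \in U /\ x \notin S.
  move=> x xB; have := ABU x; rewrite in_setU in_setD xB orbT /=.
  by move/esym/andP=> [].
have hbl : forall a z, a \in U -> a \notin S -> z \in S -> index a s < index z s.
  move=> a z aU aS zS.
  have -> : s = (pre ++ sA ++ sB) ++ (sS ++ post) by rewrite /s !catA.
  apply: block_lt; first by move: us; rewrite /s !catA.
    by rewrite !mem_cat mA mB; move: aU; rewrite memU (negbTE aS) orbF => ->; rewrite orbT.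
  by rewrite mem_cat mS zS.
have cnt : forall C : {set 'I_n}, (forall x, x \in C -> x \in U /\ x \notin S) ->
    (forall u w, u \in C -> w \notin C -> e u w -> w \in S \/ w \notin U) ->
    v \in C \/ v \in S ->
    #|ss_vertices e s v :&: U| <= #|ss_vertices e s v :&: C| + #|S|.
  move=> C hC hNC hv; apply: card_sub_U; apply/subsetP=> y; rewrite !inE => /andP[c yU].
  by case: (region_inv sg us alls hC SU hNC hbl hNU hv c yU) => H; rewrite ?c H ?orbT.
have INRle : forall a b, a <= b -> Rle (INR a) (INR b) by move=> a b /leP; apply: le_INR.
case/or3P: (etrans (esym (memU v)) vU) => [vA|vB|vS].
- have hNC : forall u w, u \in A -> w \notin A -> e u w -> w \in S \/ w \notin U.
    move=> u w uA wA euw; case wU: (w \in U); last by right.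
    left; move: wU; rewrite memU (negbTE wA) /=; case/orP=> // wB.
    by have := noAB u w uA wB; rewrite euw.
  have IH := IHA pre (sB ++ sS ++ post).
  have E : pre ++ sA ++ sB ++ sS ++ post = s by rewrite /s !catA.
  rewrite E in IH.
  have bA : Rle (INR #|ss_vertices e s v :&: A|) (F #|A|).
    apply: IH => //.
    move=> u w uA wA euw u' u'A.
    case: (hNC u w uA wA euw) => [wS|wU].
      by apply: hbl (proj2 (AS u' u'A)) wS; exact: (proj1 (AS u' u'A)).
    exact: hNU (proj1 (AS u uA)) wU euw u' (proj1 (AS u' u'A)).
  have := INRle _ _ (cnt A AS hNC (or_introl vA)); rewrite plus_INR; lra.
- have hNC : forall u w, u \in B -> w \notin B -> e u w -> w \in S \/ w \notin U.
    move=> u w uB wB euw; case wU: (w \in U); last by right.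
    left; move: wU; rewrite memU (negbTE wB) /=; case/orP=> // wA.
    by have := noAB w u wA uB; rewrite se euw.
  have IH := IHB (pre ++ sA) (sS ++ post).
  have E : (pre ++ sA) ++ sB ++ sS ++ post = s by rewrite /s !catA.
  rewrite E in IH.
  have bB : Rle (INR #|ss_vertices e s v :&: B|) (F #|B|).
    apply: IH => //.
    move=> u w uB wB euw u' u'B.
    case: (hNC u w uB wB euw) => [wS|wU].
      by apply: hbl (proj2 (BS u' u'B)) wS; exact: (proj1 (BS u' u'B)).
    exact: hNU (proj1 (BS u uB)) wU euw u' (proj1 (BS u' u'B)).
  have := INRle _ _ (cnt B BS hNC (or_introl vB)); rewrite plus_INR; lra.
- have h0 : forall x, x \in (set0 : {set 'I_n}) -> x \in U /\ x \notin S by move=> x; rewrite inE.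
  have h1 : forall u w, u \in (set0 : {set 'I_n}) -> w \notin set0 -> e u w -> w \in S \/ w \notin U.
    by move=> u w; rewrite inE.
  have := INRle _ _ (cnt set0 h0 h1 (or_intror vS)).
  rewrite setI0 cards0 add0n; lra.
Qed.



Lemma sep_bound n (e : rel 'I_n) (K : graph_class) alpha c (U S : {set 'I_n}) :
  simple_graph e -> K n e -> subgraph_closed K -> small_separators K alpha c ->
  U != set0 -> (forall S', balanced_sep_in e U S' -> #|S| <= #|S'|) ->
  Rle (INR #|S|) (Rmult c (rpow (INR #|U|) alpha)).
Proof.
move=> [se ie] Ke scl ssep Une Smin.
have [x0 x0U] : exists x0, x0 \in U.
  by case: (set_0Vmem U) => [E|[x xU]]; [by rewrite E eqxx in Une| exists x].
pose f : 'I_#|U| -> 'I_n := fun i => enum_val i.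
have finj : injective f by move=> i j; apply: enum_val_inj.
have fU : forall i, f i \in U by move=> i; apply: enum_valP.
have fsurj : forall z, z \in U -> f (enum_rank_in x0U z) = z by move=> z zU; apply: enum_rankK_in.
pose e' : rel 'I_#|U| := fun i j => e (f i) (f j).
have sg' : simple_graph e' by split; [move=> i j; apply: se| move=> i; apply: ie].
have Ke' : K #|U| e' by apply: (scl n #|U| e e' f) => //.
have [S' [[A' [B' [_ ABS dAB noAB sz]]] bnd]] := ssep _ e' sg' Ke'.
have memf : forall (X : {set 'I_#|U|}) z, (z \in f @: X) = (z \in U) && (enum_rank_in x0U z \in X).
  move=> X z; case zU: (z \in U) => /=.
    by rewrite -{1}(fsurj z zU) mem_imset.
  by apply/imsetP=> -[i _ Ez]; move: zU; rewrite Ez fU.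
have bal : balanced_sep_in e U (f @: S').
  exists (f @: A'), (f @: B'); split.
  - by apply/subsetP=> z; rewrite memf => /andP[].
  - apply/setP=> z; rewrite in_setU in_setD !memf.
    case zU: (z \in U) => //=; rewrite ?andbT.
    by move: (congr1 (fun X : {set 'I_#|U|} => enum_rank_in x0U z \in X) ABS); rewrite /= in_setU in_setD in_setT andbT.
  - rewrite -setI_eq0 -imsetI; last by move=> i j _ _; apply: finj.
    by rewrite (disjoint_setI0 dAB) imset0.
  - move=> x y; rewrite !memf => /andP[xU xA] /andP[yU yB].
    by have := noAB _ _ xA yB; rewrite /e' !fsurj.
  - by rewrite !card_imset //; move: sz; rewrite cardsT card_ord.
have := Smin _ bal; rewrite card_imset // => /leP/le_INR H.
exact: Rle_trans H bnd.
Qed.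



Local Open Scope R_scope.

Lemma Rpower_pos' x y : 0 < Rpower x y.
Proof. unfold Rpower; apply exp_pos. Qed.

Lemma rpow_ge0 x a : 0 <= rpow x a.
Proof. rewrite /rpow; case: Rle_dec => h /=; [lra|apply Rlt_le, Rpower_pos']. Qed.

Lemma rpow_pos x a : 0 < x -> rpow x a = Rpower x a.
Proof. rewrite /rpow; case: Rle_dec => h /= hx; [lra|reflexivity]. Qed.

Lemma rpow0 a : rpow (INR 0) a = 0.
Proof. rewrite /rpow; case: Rle_dec => h /=; [lra|simpl in h; lra]. Qed.

Lemma r0_lt1 alpha : 0 < alpha -> Rpower (2/3) alpha < 1.
Proof.
intros ha.
have h1 : Rpower (2/3) alpha * Rpower (3/2) alpha = 1.
  rewrite Rpower_mult_distr; try lra.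
  replace (2/3 * (3/2)) with 1 by field.
  unfold Rpower; rewrite ln_1 Rmult_0_r exp_0; reflexivity.
have h2 : Rpower (3/2) 0 < Rpower (3/2) alpha by apply Rpower_lt; lra.
rewrite Rpower_O in h2; try lra.
have h3 := Rpower_pos' (2/3) alpha.
nra.
Qed.

Lemma rpow_scale alpha (a u : nat) : 0 < alpha -> (3 * a <= 2 * u)%N ->
  rpow (INR a) alpha <= Rpower (2/3) alpha * rpow (INR u) alpha.
Proof.
move=> ha hau.
have h0 := Rpower_pos' (2/3) alpha.
case: a hau => [|a] hau.
  rewrite rpow0; apply Rmult_le_pos; [lra|apply rpow_ge0].
have hr : 3 * INR a.+1 <= 2 * INR u.
  have := le_INR _ _ (elimT leP hau); rewrite !mult_INR /=; lra.
have hpos : 0 < INR a.+1 by apply lt_0_INR; apply/ltP.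
rewrite !rpow_pos; try lra.
rewrite Rpower_mult_distr; try lra.
apply Rle_Rpower_l; lra.
Qed.

Lemma consts alpha c c' : 0 < alpha -> 0 < c -> 0 < c' ->
  exists Kr a r0, 0 < r0 /\ r0 < 1 /\ Kr * (1 - r0) = c /\ 0 < Kr /\ a * c' = Kr /\ 0 < a
     /\ r0 = Rpower (2/3) alpha.
Proof.
move=> ha hc hc'.
have r0p := Rpower_pos' (2/3) alpha.
have r0l := r0_lt1 ha.
exists (c / (1 - Rpower (2/3) alpha)), (c / (1 - Rpower (2/3) alpha) / c'), (Rpower (2/3) alpha).
split=> //; split=> //; split; [field; lra|split; [apply Rdiv_lt_0_compat; lra|split; [field; lra|split=> //]]].
apply Rdiv_lt_0_compat; [apply Rdiv_lt_0_compat|]; lra.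
Qed.

Lemma n0_lemma alpha c' : 0 < alpha -> 0 < c' ->
  exists n0 : nat, forall n : nat, leq n0 n -> 0 < INR n /\ 2 <= c' * rpow (INR n) alpha.
Proof.
move=> ha hc.
pose N := Rpower (2 / c') (1 / alpha).
have Np : 0 < N := Rpower_pos' _ _.
have [n0 hn0] := INR_unbounded N.
exists n0 => n hn.
have h1 : INR n0 <= INR n by apply: le_INR; apply/leP.
have hpos : 0 < INR n by lra.
split=> //.
rewrite rpow_pos //.
have : Rpower N alpha <= Rpower (INR n) alpha by apply Rle_Rpower_l; lra.
rewrite /N Rpower_mult.
replace (1 / alpha * alpha) with 1 by (field; lra).
rewrite Rpower_1; last by apply Rdiv_lt_0_compat; lra.
move=> h.
have : c' * (2 / c') <= c' * Rpower (INR n) alpha by apply Rmult_le_compat_l; lra.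
replace (c' * (2 / c')) with 2 by (field; lra).
done.
Qed.

Local Close Scope R_scope.


Lemma up_card (T : finType) (rk : T -> nat) (M : {set T}) : injective rk ->
  2 * #|[set p : T * T | [&& p.1 \in M, p.2 \in M & rk p.1 < rk p.2]]| + #|M| = #|M| * #|M|.
Proof.
move=> rkinj.
set UP := [set p : T * T | [&& p.1 \in M, p.2 \in M & rk p.1 < rk p.2]].
pose sw (p : T * T) := (p.2, p.1).
have swinj : injective sw by move=> [a b] [c d] [-> ->].
pose DN := sw @^-1: UP.
pose DG := [set p : T * T | (p.1 \in M) && (p.2 == p.1)].
have cDN : #|DN| = #|UP| by apply: card_preimset.
have cDG : #|DG| = #|M|.
  have -> : DG = (fun x => (x, x)) @: M.
    apply/setP=> -[a b]; rewrite inE /=; apply/andP/imsetP.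
      by move=> [aM /eqP ->]; exists a.
    by move=> [x xM [-> ->]]; rewrite xM eqxx.
  by apply: card_imset => x y [].
have E : setX M M = (UP :|: DN) :|: DG.
  apply/setP=> -[a b]; rewrite !inE /=.
  case aM: (a \in M); case bM: (b \in M); rewrite /= ?andbF //=.
  case: (ltngtP (rk a) (rk b)) => //= Eab.
  by rewrite (rkinj _ _ Eab) eqxx.
  by apply/esym/negbTE; apply/eqP=> Eba; rewrite Eba aM in bM.
have cX := cardsX M M.
have d1 : UP :&: DN = set0.
  apply/setP=> -[x1 y1]; rewrite !inE /=.
  by apply/negbTE; apply/negP=> /andP[/and3P[_ _ h1] /and3P[_ _ h2]]; lia.
have d2 : (UP :|: DN) :&: DG = set0.
  apply/setP=> -[x1 y1]; rewrite !inE /=.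
  apply/negbTE; apply/negP=> /andP[/orP[/and3P[_ _ h1]|/and3P[_ _ h1]] /andP[_ /eqP Eb]]; subst y1; lia.
have := cardsUI UP DN; rewrite d1 cards0 addn0 cDN => c1.
have := cardsUI (UP :|: DN) DG; rewrite d2 cards0 addn0 c1 cDG -E cX => H.
by move: H; move: (#|UP|) (#|M|) => u m; lia.
Qed.


Lemma sum_le_max n (f : 'I_n -> nat) : \sum_(v : 'I_n) f v <= n * \max_(v : 'I_n) f v.
Proof.
rewrite -[X in X * _]card_ord -sum_nat_const; apply: leq_sum => v _; exact: leq_bigmax.
Qed.

Lemma sum_ge n (f : 'I_n -> nat) (Q : {set 'I_n}) k :
  (forall v, v \in Q -> k <= f v) -> #|Q| * k <= \sum_(v : 'I_n) f v.
Proof.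
move=> H; rewrite -sum_nat_const [X in _ <= X](bigID (mem Q)) /=.
apply: leq_trans (leq_addr _ _); apply: leq_sum => v vQ; exact: H.
Qed.

Lemma INRle' a b : a <= b -> Rle (INR a) (INR b).
Proof. by move=> /leP; apply: le_INR. Qed.

Theorem mainTheorem3 (alpha c c' : R) :
  Rlt R0 alpha -> Rlt alpha R1 -> Rlt R0 c -> Rlt R0 c' ->
  exists (C : R) (n0 : nat),
    forall (K : graph_class),
      subgraph_closed K -> small_separators K alpha c ->
      forall (n : nat) (e : rel 'I_n),
        simple_graph e -> K n e -> connected_graph e -> n0 <= n ->
        (forall S, balanced_sep e S -> Rle (Rmult c' (rpow (INR n) alpha)) (INR #|S|)) ->
        forall (snd s : seq 'I_n),
          nested_dissection_order e snd -> vertex_order s ->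
          [/\ Rle (INR (max_ss_vertices e snd)) (Rmult C (INR (max_ss_vertices e s))),
              Rle (INR (max_ss_arcs e snd)) (Rmult C (INR (max_ss_arcs e s))),
              Rle (avg_ss_vertices e snd) (Rmult C (avg_ss_vertices e s)) &
              Rle (avg_ss_arcs e snd) (Rmult C (avg_ss_arcs e s))].
Proof.
move=> ha ha1 hc hc'.
have [Kr [a [r0 [r0p [r0l [Krc [Krpos [ac [apos r0E]]]]]]]]] := consts ha hc hc'.
have [n0 hn0] := n0_lemma ha hc'.
exists (Cof a), n0 => K scl ssep n e sg Ke conn hn Hsep snd s nd vo.
have [hnpos hX2] := hn0 n hn.
have npos : (0 < n)%N.
  case: (posnP n) => // nE; move: hnpos; rewrite nE /=; lra.
pose X := rpow (INR n) alpha.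
have Xpos : Rlt 0 X by rewrite /X rpow_pos //; apply Rpower_pos'.
pose F := fun m : nat => Rmult Kr (rpow (INR m) alpha).
have Hstep : forall U S A B, U != set0 -> bal_sep_in e U S A B ->
     (forall S', balanced_sep_in e U S' -> #|S| <= #|S'|) ->
     [/\ Rle (Rplus (INR #|S|) (F #|A|)) (F #|U|), Rle (Rplus (INR #|S|) (F #|B|)) (F #|U|) & Rle (INR #|S|) (F #|U|)].
  move=> U S A B hne hbal hmin.
  have hS := sep_bound sg Ke scl ssep hne hmin.
  move: (hbal) => [_ _ _ _ /andP[hA hB]].
  have rA := rpow_scale ha hA; have rB := rpow_scale ha hB.
  rewrite -r0E in rA rB.
  have [h1 [h2 h3]] := step_real _ _ _ _ _ _ _ Krpos r0p r0l Krc (rpow_ge0 _ _) hS rA rB.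
  by split.
have [usnd msnd] := nd_mem nd.
have NB : forall v, Rle (INR #|ss_vertices e snd v|) (Rmult Kr X).
  move=> v.
  have H := @nd_ind n e F sg Hstep _ _ nd [::] [::].
  rewrite /= cats0 in H.
  have := H usnd (fun z => etrans (msnd z) (in_setT z)) _ v (in_setT v).
  rewrite setIT cardsT card_ord; apply=> u w _; by rewrite in_setT.
have cn : (0 < #|'I_n|)%N by rewrite card_ord.
have VnB : Rle (INR (max_ss_vertices e snd)) (Rmult Kr X).
  by have [v0 Ev] := eq_bigmax (fun v => #|ss_vertices e snd v|) cn; rewrite /max_ss_vertices Ev.
have arc_le : forall s' v, (#|ss_arcs e s' v| <= #|ss_vertices e s' v| * #|ss_vertices e s' v|)%N.
  move=> s' v; rewrite -cardsX; apply: subset_leq_card; apply/subsetP=> -[x y].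
  by rewrite /ss_arcs inE /= => /and3P[h1 h2 _]; rewrite in_setX h1 h2.
have AnV : (max_ss_arcs e snd <= max_ss_vertices e snd * max_ss_vertices e snd)%N.
  apply/bigmax_leqP => v _; apply: leq_trans (arc_le _ v) _.
  by apply: leq_mul; apply: leq_bigmax.
have SVnV := sum_le_max (fun v => #|ss_vertices e snd v|).
have SAnA := sum_le_max (fun v => #|ss_arcs e snd v|).
have [Q [M [Qbig Msep Mreach Mclique]]] := lower_struct sg conn vo npos.
have hm := Hsep M Msep.
have [us alls _ _] := vo_facts vo.
have rkinj : injective (fun x => index x s).
  by move=> x y E; apply: (index_inj x (alls x) (alls y) E).
set UP := [set p : 'I_n * 'I_n | [&& p.1 \in M, p.2 \in M & index p.1 s < index p.2 s]].
have cUP : (2 * #|UP| + #|M| = #|M| * #|M|)%N := up_card M rkinj.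
have SSm : forall v, v \in Q -> (#|M| <= #|ss_vertices e s v|)%N.
  by move=> v vQ; apply: subset_leq_card; apply: Mreach.
have UPsub : forall v, v \in Q -> (#|UP| <= #|ss_arcs e s v|)%N.
  move=> v vQ; apply: subset_leq_card; apply/subsetP=> -[x y].
  rewrite inE /= => /and3P[xM yM lxy].
  rewrite /ss_arcs inE /= (subsetP (Mreach v vQ) x xM) (subsetP (Mreach v vQ) y yM) /=.
  rewrite /up_graph lxy andbT; apply: Mclique => //.
  by apply/eqP=> Exy; move: lxy; rewrite Exy ltnn.
have [x0 x0Q] : exists x, x \in Q.
  case: (set_0Vmem Q) => [E|[x xQ]]; last by exists x.
  by move: Qbig; rewrite E cards0.
have Vpm : (#|M| <= max_ss_vertices e s)%N.
  exact: leq_trans (SSm x0 x0Q) (leq_bigmax (F := fun v => #|ss_vertices e s v|) x0).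
have Apu : (#|UP| <= max_ss_arcs e s)%N.
  exact: leq_trans (UPsub x0 x0Q) (leq_bigmax (F := fun v => #|ss_arcs e s v|) x0).
have SVpm := sum_ge (f := fun v => #|ss_vertices e s v|) SSm.
have SApu := sum_ge (f := fun v => #|ss_arcs e s v|) UPsub.
have [h1 [h2 [h3 h4]]] := final_real' _ _ _ _ _ _ _ _ _ _ _ _ _ _ _ _ hc' apos ac Xpos hm hX2 hnpos
  (INR_lt3 _ _ (elimT ltP Qbig)) (pos_INR _) VnB (INR_lemul' _ _ _ (elimT leP SVnV))
  (INR_lemul' _ _ _ (elimT leP AnV)) (INR_lemul' _ _ _ (elimT leP SAnA))
  (INRle' Vpm) (INR_lemul _ _ _ (elimT leP SVpm)) (INR_eq2 _ _ cUP) (INRle' Apu) (INR_lemul _ _ _ (elimT leP SApu)).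
by split.
Qed.
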